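(* Let $(\Omega,\mathcal{A})$ be a measurable space with a $\sigma$-finite measure $\mu$, $\pi$ a probability density with respect to $\mu$, and $q_1,\dots,q_D$ transition densities (for each $x$, $q_d(x,\cdot)$ is a probability density with respect to $\mu$). Write $\bar\pi=\pi\otimes\pi$ and $(X,X')\sim\bar\pi$. Assume (A1): for every $d$, $\bar\pi\{(x,x'):q_d(x,x')=0\}=0$; (A2): for every $d$, $\mathbb{E}_{\bar\pi}[|\log q_d(X,X')|]<\infty$. Let $\mathcal{S}$, $\mathcal{E}_{\bar\pi}$, $F$, $\alpha^{\max}$ be as in the context, and let $(\alpha^t)_{t\ge1}$ be defined by $\alpha^1=(1/D,\dots,1/D)$ and $\alpha^{t+1}=F(\alpha^t)$. Then for every $\alpha\in\mathcal{S}$ with $\alpha\ne\alpha^{\max}$ there is a neighborhood $V_\alpha$ of $\alpha$ in $\mathcal{S}$ such that if $\alpha^{t_0}\in V_\alpha$ for some $t_0$, then there exists $t>t_0$ with $\alpha^t\notin V_\alpha$.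
   Context: $\mathcal{S}=\{\alpha\in\mathbb{R}^D:\alpha_d\ge0,\ \sum_d\alpha_d=1\}$; $\mathcal{E}_{\bar\pi}(\alpha)=\mathbb{E}_{\bar\pi}[\log\sum_{d=1}^D\alpha_dq_d(X,X')]$; $F(\alpha)=\big(\mathbb{E}_{\bar\pi}[\alpha_dq_d(X,X')/\sum_{j=1}^D\alpha_jq_j(X,X')]\big)_{1\le d\le D}$. Standing assumption of the paper's setting: $\mathcal{E}_{\bar\pi}$ is strictly concave on $\mathcal{S}$; $\alpha^{\max}$ denotes its unique global maximizer on $\mathcal{S}$. *)

(* Defs.v *)
From HB Require Import structures.
From mathcomp Require Import all_boot all_order all_algebra.
From mathcomp Require Import all_classical all_reals all_analysis.
Set Implicit Arguments. Unset Strict Implicit. Unset Printing Implicit Defensive.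
Import Order.TTheory GRing.Theory Num.Theory.
Import numFieldNormedType.Exports.
Local Open Scope classical_set_scope.
Local Open Scope ring_scope.

Section Defs.
Context {d : measure_display} {T : measurableType d} {R : realType}.

Definition simplex (D : nat) : set 'rV[R]_D :=
  [set a | (forall i, 0 <= a ord0 i) /\ \sum_(i < D) a ord0 i = 1].

Definition Epibar (mu : {sigma_finite_measure set T -> \bar R}) (pi : T -> R)
  (f : T * T -> R) : \bar R :=
  (\int[(mu \x mu)%E]_z ((pi z.1 * pi z.2) * f z)%:E)%E.

Definition mixq (D : nat) (q : 'I_D -> T -> T -> R) (a : 'rV[R]_D)
  (z : T * T) : R := \sum_(j < D) a ord0 j * q j z.1 z.2.

(* E_pibar(alpha) = E_pibar[ log sum_d alpha_d q_d(X,X') ] (finite on S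
   under (A1)-(A2); we take its real value) *)
Definition Ecal (mu : {sigma_finite_measure set T -> \bar R}) (pi : T -> R)
  (D : nat) (q : 'I_D -> T -> T -> R) (a : 'rV[R]_D) : R :=
  fine (Epibar mu pi (fun z => ln (mixq q a z))).

Definition Fmap (mu : {sigma_finite_measure set T -> \bar R}) (pi : T -> R)
  (D : nat) (q : 'I_D -> T -> T -> R) (a : 'rV[R]_D) : 'rV[R]_D :=
  \row_(i < D) fine (Epibar mu pi (fun z => a ord0 i * q i z.1 z.2 / mixq q a z)).

(* alpha^1 = (1/D,...,1/D), alpha^{t+1} = F(alpha^t)  (indexed from t = 1) *)
Definition alpha_seq (mu : {sigma_finite_measure set T -> \bar R}) (pi : T -> R)
  (D : nat) (q : 'I_D -> T -> T -> R) (t : nat) : 'rV[R]_D :=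
  iter t.-1 (Fmap mu pi q) (const_mx (D%:R^-1)).

End Defs.

(* Main.v *)
Require Import Defs.
From HB Require Import structures.
From mathcomp Require Import all_boot all_order all_algebra.
From mathcomp Require Import all_classical all_reals all_analysis.
Import Order.TTheory GRing.Theory Num.Theory.
Import numFieldNormedType.Exports.
From mathcomp Require Import measurable_realfun.
From mathcomp Require Import lra ring.
Local Open Scope classical_set_scope.
Local Open Scope ring_scope.

Lemma measurable_inv (R : realType) : measurable_fun [set: R] (@GRing.inv R).
Proof.
have -> : (@GRing.inv R) = (fun x => if x == 0 then 0 else
   if 0 < x then expR (- ln x) else - expR (- ln (- x))).
  apply/funext => x; case: eqP => [->|/eqP x0]; first by rewrite invr0.
  case: ifPn => x0'.
    by rewrite -lnV ?posrE// lnK ?posrE ?invr_gt0.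
  have xn : 0 < - x by rewrite oppr_gt0 lt_neqAle x0 /= leNgt.
  by rewrite -lnV ?posrE// lnK ?posrE ?invr_gt0// invrN opprK.
apply: measurable_fun_ifT.
- by apply: measurable_realfun.measurable_fun_eqr => //; exact: measurable_cst.
- exact: measurable_cst.
apply: measurable_fun_ifT.
- by apply: measurable_realfun.measurable_fun_ltr => //; exact: measurable_cst.
- by apply: measurableT_comp => //; apply: measurableT_comp => //.
apply: measurableT_comp => //; apply: measurableT_comp => //.
apply: measurableT_comp => //; apply: measurableT_comp => //.
Qed.

Lemma term_le_sum {R : realType} {D : nat} (f : 'I_D -> R) k :
  (forall i, 0 <= f i) -> f k <= \sum_i f i.
Proof. by move=> f0; rewrite (bigD1 k)//= lerDl sumr_ge0. Qed.

Lemma ln_mix_bound (R : realType) (D : nat) (b c : 'I_D -> R) :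
  (forall k, 0 <= b k) -> \sum_k b k = 1 -> (forall k, 0 <= c k) ->
  `|ln (\sum_k b k * c k)| <= \sum_k `|ln (c k)| + \sum_k `|ln (b k)|.
Proof.
move=> b0 b1 c0.
set m := \sum_k b k * c k.
have S1 : 0 <= \sum_k `|ln (c k)| by apply: sumr_ge0.
have S2 : 0 <= \sum_k `|ln (b k)| by apply: sumr_ge0.
have [m0|m0] := eqVneq m 0; first by rewrite m0 ln0// normr0 addr_ge0.
have mpos : 0 < m by rewrite lt_neqAle eq_sym m0 sumr_ge0// => k _; rewrite mulr_ge0.
rewrite ler_norml; apply/andP; split.
  have /existsP [k bk] : [exists k, 0 < b k * c k].
    apply: contraT; rewrite negb_exists => /forallP H.
    have : m <= 0.
      by rewrite /m; apply: sumr_le0 => k _; rewrite leNgt H.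
    by rewrite leNgt mpos.
  have bk0 : 0 < b k.
    by rewrite lt_neqAle b0 andbT; apply: contraTneq bk => <-; rewrite mul0r ltxx.
  have ck0 : 0 < c k.
    by rewrite lt_neqAle c0 andbT; apply: contraTneq bk => <-; rewrite mulr0 ltxx.
  have mk : b k * c k <= m.
    by rewrite /m (bigD1 k)//= lerDl sumr_ge0// => i _; rewrite mulr_ge0.
  have L1 : ln (b k * c k) <= ln m by rewrite ler_ln ?posrE// mulr_gt0.
  rewrite lnM ?posrE// in L1.
  have Hb : `|ln (b k)| <= \sum_k `|ln (b k)| by apply: (term_le_sum (fun i => `|ln (b i)|)).
  have Hc : `|ln (c k)| <= \sum_k `|ln (c k)| by apply: (term_le_sum (fun i => `|ln (c i)|)).
  have := ler_norm (- ln (b k)); have := ler_norm (- ln (c k)); rewrite !normrN.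
  move=> H1 H2; apply: le_trans L1; lra.
set M := \big[Num.max/0]_k c k.
have mM : m <= M.
  apply: (@le_trans _ _ (\sum_k b k * M)).
    by apply: ler_sum => k _; apply: ler_wpM2l => //; exact: le_bigmax.
  by rewrite -mulr_suml b1 mul1r.
have MP : 0 < M by apply: lt_le_trans mM.
have L1 : ln m <= ln M by rewrite ler_ln ?posrE.
have L2 : ln M <= \sum_k `|ln (c k)|.
  rewrite /M; apply: (big_ind (fun x => ln x <= \sum_k `|ln (c k)|)).
  - by rewrite ln0.
  - by move=> x y hx hy; case: (leP x y).
  - move=> k _; apply: le_trans (ler_norm _) _.
    exact: (term_le_sum (fun i => `|ln (c i)|)).
lra.
Qed.

Lemma limn_einf_ge (R : realType) (u : (\bar R)^nat) x :
  (forall n, (x <= u n)%E) -> (x <= limn_einf u)%E.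
Proof.
move=> ux; rewrite limn_einf_lim; apply: lime_ge; first exact: is_cvg_einfs.
by apply: nearW => n; apply: le_ereal_inf_tmp => _ [k _ <-]; exact: ux.
Qed.

Lemma liminf_gt (R : realType) (u : (\bar R)^nat) (y : R) :
  (y%:E < limn_einf u)%E -> exists N, forall n, (N <= n)%N -> (y%:E <= u n)%E.
Proof.
rewrite limn_einf_lim (cvg_lim _ (@cvg_einfs_sup _ u))// => /ereal_sup_gt[_ [N _ <-]] yN.
exists N => n Nn; apply: (le_trans (ltW yN)).
by apply: ge_ereal_inf; exists (u n) => //; exists n.
Qed.

Lemma growth_contra (R : realType) (x : nat -> R) (y l : R) N :
  1 < y -> 0 < x N -> (forall n, (N <= n)%N -> y * x n <= x n.+1) ->
  x @ \oo --> l -> False.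
Proof.
move=> y1 x0 gr /cvgrPdist_lt /(_ 1%R ltr01) [M _ HM].
have ind : forall k, x N * (1 + k%:R * (y - 1)) <= x (N + k)%N.
  elim=> [|k IH]; first by rewrite mul0r addr0 mulr1 addn0.
  have := gr (N + k)%N (leq_addr _ _); rewrite addnS => H.
  apply: le_trans H; rewrite -natr1.
  have h1 : 0 <= x N * k%:R * (y - 1) ^+ 2.
    by rewrite mulr_ge0// ?sqr_ge0// mulr_ge0// ltW.
  have h2 := ler_wpM2l (ltW (lt_trans ltr01 y1)) IH.
  apply: le_trans h2; rewrite -subr_ge0.
  have -> : y * (x N * (1 + k%:R * (y - 1))) - x N * (1 + (k%:R + 1) * (y - 1))
     = x N * k%:R * (y - 1) ^+ 2 by ring.
  exact: h1.
pose k := ((Num.truncn ((`|l| + 1) / (x N * (y - 1)))).+1 + M)%N.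
have k1 : (`|l| + 1) / (x N * (y - 1)) < k%:R.
  apply: lt_le_trans (truncnS_gt _) _.
  by rewrite ler_nat leq_addr.
have Hk := HM (N + k)%N (leq_trans (leq_addl _ M) (leq_addl _ _)).
have := ind k; move: Hk => /=.
have yp : 0 < x N * (y - 1) by rewrite mulr_gt0// subr_gt0.
rewrite ltr_pdivrMr// in k1.
have := ler_norm l; have := ler_norm (x (N + k)%N - l); rewrite distrC.
move=> h1 h2 h3 h4.
have : 0 <= x N by exact: ltW.
nra.
Qed.

Section S.
Context (d : measure_display) (T : measurableType d) (R : realType)
  (mu : {sigma_finite_measure set T -> \bar R})
  (pi : T -> R) (D : nat) (q : 'I_D -> T -> T -> R)
  (pi_meas : measurable_fun setT pi)
  (pi_ge0 : forall x, 0 <= pi x)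
  (pi_int1 : (\int[mu]_x (pi x)%:E = 1)%E)
  (q_meas : forall i, measurable_fun setT (fun z : T * T => q i z.1 z.2))
  (q_ge0 : forall i x y, 0 <= q i x y).

Definition PP (z : T * T) : R := pi z.1 * pi z.2.

Lemma PP_ge0 z : 0 <= PP z.
Proof. by rewrite /PP mulr_ge0. Qed.

Lemma mPP : measurable_fun setT PP.
Proof.
exact: (measurable_realfun.measurable_funM (measurableT_comp pi_meas measurable_fst)
   (measurableT_comp pi_meas measurable_snd)).
Qed.

Lemma intPP : (\int[(mu \x mu)%E]_z (PP z)%:E = 1)%E.
Proof.
rewrite (fubini_tonelli1 (fun z => (PP z)%:E)); last 2 first.
- by apply/measurable_EFinP; exact: mPP.
- by move=> z; rewrite lee_fin PP_ge0.
transitivity (\int[mu]_x (pi x)%:E)%E; last exact: pi_int1.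
apply: eq_integral => x _; rewrite /fubini_F /PP /=.
under eq_integral do rewrite EFinM.
rewrite ge0_integralZl_EFin//; first by rewrite pi_int1 mule1.
- by move=> y _; rewrite lee_fin.
- by apply/measurable_EFinP.
Qed.

Lemma mmix (a : 'rV[R]_D) : measurable_fun setT (mixq q a).
Proof.
apply: measurable_sum => j.
apply: measurable_realfun.measurable_funM; first exact: measurable_cst.
exact: q_meas.
Qed.

Lemma mrat j (a : 'rV[R]_D) :
  measurable_fun setT (fun z => q j z.1 z.2 / mixq q a z).
Proof.
apply: measurable_realfun.measurable_funM; first exact: q_meas.
exact: measurableT_comp (measurable_inv R) (mmix a).
Qed.

Lemma mix_ge0 (a : 'rV[R]_D) z : (forall i, 0 <= a ord0 i) -> 0 <= mixq q a z.
Proof. by move=> a0; apply: sumr_ge0 => j _; rewrite mulr_ge0. Qed.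


Section S2.
Variable (A1 : forall i, (\int[(mu \x mu)%E]_(z in [set z : T * T | q i z.1 z.2 = 0%R])
                     (pi z.1 * pi z.2)%:E = 0)%E).

Lemma AE : {ae (mu \x mu)%E, forall z : T * T, forall k, PP z = 0 \/ 0 < q k z.1 z.2}.
Proof.
apply: filter_forall => k.
have mZ : measurable [set z : T * T | q k z.1 z.2 = 0%R].
  have := q_meas k measurableT [set 0%R] (measurable_set1 0%R).
  by rewrite setTI.
have := A1 k.
rewrite (_ : (\int[_]_(z in _) _)%E = (\int[(mu \x mu)%E]_(z in [set z : T * T | q k z.1 z.2 = 0%R]) `|(PP z)%:E|)%E); last first.
  by apply: eq_integral => z _; rewrite gee0_abs// lee_fin PP_ge0.
move/(ae_eq_integral_abs _ mZ) => H.
have mE : measurable_fun setT (fun z => (PP z)%:E) by apply/measurable_EFinP; exact: mPP.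
have {H} := H (measurable_funS measurableT (subsetT _) mE).
apply: filterS => z /= H.
have [qz|qz] := eqVneq (q k z.1 z.2) 0%R.
  by left; have := H qz; move=> [].
by right; rewrite lt_neqAle eq_sym qz q_ge0.
Qed.

Lemma mix_ge_term (a : 'rV[R]_D) z j : (forall i, 0 <= a ord0 i) ->
  a ord0 j * q j z.1 z.2 <= mixq q a z.
Proof.
move=> a0; rewrite /mixq (bigD1 j)//= lerDl sumr_ge0// => i _.
by rewrite mulr_ge0.
Qed.

Lemma mEF {f : T * T -> R} : measurable_fun setT f ->
  measurable_fun setT (fun z => (f z)%:E).
Proof. by move=> mf; apply/measurable_EFinP. Qed.

Lemma mPrat j (a : 'rV[R]_D) :
  measurable_fun setT (fun z => (PP z * (q j z.1 z.2 / mixq q a z))%:E).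
Proof. by apply: mEF; apply: measurable_realfun.measurable_funM; [exact: mPP|exact: mrat]. Qed.

Lemma G_pos (a : 'rV[R]_D) j : (forall i, 0 <= a ord0 i) -> 0 < a ord0 j ->
  (0 < \int[(mu \x mu)%E]_z (PP z * (q j z.1 z.2 / mixq q a z))%:E)%E.
Proof.
move=> a0 aj.
rewrite lt_neqAle integral_ge0 ?andbT; last first.
  by move=> z _; rewrite lee_fin mulr_ge0 ?PP_ge0// divr_ge0// mix_ge0.
apply/negP => /eqP /esym H0.
have : (\int[(mu \x mu)%E]_z `|(PP z * (q j z.1 z.2 / mixq q a z))%:E| = 0)%E.
  rewrite -H0; apply: eq_integral => z _; rewrite gee0_abs// lee_fin.
  by rewrite mulr_ge0 ?PP_ge0// divr_ge0// mix_ge0.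
move/(ae_eq_integral_abs _ measurableT) => /(_ (mPrat j a)) Hae.
have HP : ae_eq (mu \x mu)%E setT (fun z => (PP z)%:E) (cst 0%E).
  apply: filterS2 Hae AE => z H1 H2 _.
  suff -> : PP z = 0 by [].
  have := H1 I; rewrite /= => /eqP; rewrite eqe mulf_eq0 => /orP[/eqP->//|].
  rewrite mulf_eq0 invr_eq0 => /orP[]/eqP qz.
    by case: (H2 j) => //; rewrite qz ltxx.
  have [/eqP//|PPz] := eqVneq (PP z) 0%R.
  have [|] := H2 j; first by move=> /eqP; rewrite (negbTE PPz).
  move=> qj; have := mix_ge_term a z j a0.
  by rewrite qz leNgt mulr_gt0.
have := ae_eq_integral (cst 0%E) (fun z => (PP z)%:E) measurableT (mEF mPP) (measurable_cst _) HP.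
by rewrite intPP integral0 => /eqP; rewrite eqe oner_eq0.
Qed.

Definition Gint j (a : 'rV[R]_D) :=
  (\int[(mu \x mu)%E]_z (PP z * (q j z.1 z.2 / mixq q a z))%:E)%E.

Lemma Gint_ge0 j (a : 'rV[R]_D) : (forall i, 0 <= a ord0 i) -> (0 <= Gint j a)%E.
Proof.
move=> a0; apply: integral_ge0 => z _.
by rewrite lee_fin mulr_ge0 ?PP_ge0// divr_ge0// mix_ge0.
Qed.

Lemma ratio_le1 (a : 'rV[R]_D) j z : (forall i, 0 <= a ord0 i) ->
  a ord0 j * q j z.1 z.2 / mixq q a z <= 1.
Proof.
move=> a0; have [m0|m0] := eqVneq (mixq q a z) 0%R.
  by rewrite m0 invr0 mulr0.
have mp : 0 < mixq q a z by rewrite lt_neqAle eq_sym m0 mix_ge0.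
by rewrite ler_pdivrMr// mul1r mix_ge_term.
Qed.

Lemma Fmap_entry (a : 'rV[R]_D) j : (forall i, 0 <= a ord0 i) ->
  (Fmap mu pi q a) ord0 j = fine ((a ord0 j)%:E * Gint j a)%E /\
  ((a ord0 j)%:E * Gint j a)%E \is a fin_num /\
  (0 <= (a ord0 j)%:E * Gint j a <= 1)%E.
Proof.
move=> a0.
have E : (Epibar mu pi (fun z => (a ord0 j * q j z.1 z.2 / mixq q a z)%R)
   = (a ord0 j)%:E * Gint j a)%E.
  rewrite /Epibar /Gint -ge0_integralZl_EFin//; last 2 first.
  - by move=> z _; rewrite lee_fin mulr_ge0 ?PP_ge0// divr_ge0// mix_ge0.
  - exact: mPrat.
  apply: eq_integral => z _; rewrite -EFinM; congr EFin.
  by rewrite /PP !mulrA [_ * a ord0 j]mulrC !mulrA.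
have B : (0 <= (a ord0 j)%:E * Gint j a <= 1)%E.
  rewrite mule_ge0 ?Gint_ge0 ?lee_fin//= -E -intPP /Epibar.
  have h10 : forall z, setT z -> (0 <= (PP z * (a ord0 j * q j z.1 z.2 / mixq q a z))%:E)%E.
    by move=> z _; rewrite lee_fin mulr_ge0 ?PP_ge0// divr_ge0 ?mix_ge0// mulr_ge0.
  have hm1 : measurable_fun setT (fun z => (PP z * (a ord0 j * q j z.1 z.2 / mixq q a z))%:E).
    apply: mEF; apply: measurable_realfun.measurable_funM; first exact: mPP.
    rewrite (_ : (fun z => _) = (fun z => a ord0 j * (q j z.1 z.2 / mixq q a z))).
      by apply: measurable_realfun.measurable_funM; [exact: measurable_cst|exact: mrat].
    by apply/funext => z; rewrite mulrA.
  have hm2 := mEF mPP.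
  have h12 : forall z, setT z -> ((PP z * (a ord0 j * q j z.1 z.2 / mixq q a z))%:E <= (PP z)%:E)%E.
    move=> z _; rewrite lee_fin ler_piMr ?PP_ge0//.
    exact: ratio_le1.
  by apply: ge0_le_integral => //; first [exact h10 | exact hm1 | exact hm2 | exact h12].
split; first by rewrite mxE E.
split=> //; rewrite ge0_fin_numE; last by case/andP: B.
by case/andP: B => _ /le_lt_trans; apply; rewrite ltey.
Qed.

Definition sq n := iter n (Fmap mu pi q) (const_mx (D%:R^-1)).

Lemma sqS n : sq n.+1 = Fmap mu pi q (sq n).
Proof. by []. Qed.

Lemma sq_pos (D0 : (0 < D)%N) n i : 0 < sq n ord0 i.
Proof.
elim: n i => [|n IH] i.
  by rewrite /sq /= mxE invr_gt0 ltr0n.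
have a0 : forall i, 0 <= sq n ord0 i by move=> k; exact/ltW/IH.
have [-> [fin /andP[x0 x1]]] := Fmap_entry (sq n) i a0.
have : (0 < (sq n ord0 i)%:E * Gint i (sq n))%E.
  by rewrite mule_gt0// ?lte_fin ?IH// G_pos.
by rewrite -(fineK fin) lte_fin.
Qed.

Lemma sq_growth (D0 : (0 < D)%N) n j (y : R) : 0 <= y -> (y%:E <= Gint j (sq n))%E ->
  y * sq n ord0 j <= sq n.+1 ord0 j.
Proof.
move=> y0 yG.
have a0 : forall i, 0 <= sq n ord0 i by move=> k; exact/ltW/sq_pos.
rewrite sqS; have [-> [fin _]] := Fmap_entry (sq n) j a0.
rewrite -lee_fin fineK// mulrC EFinM.
by apply: lee_wpmul2l; rewrite ?lee_fin.
Qed.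

Variable (A2 : forall i, (Epibar mu pi (fun z => `|ln (q i z.1 z.2)|%R) < +oo)%E).

Let mm := (mu \x mu)%E.

Lemma int_PPlnq i : mm.-integrable setT (fun z => (PP z * `|ln (q i z.1 z.2)|)%:E).
Proof.
have mf : measurable_fun setT (fun z => (PP z * `|ln (q i z.1 z.2)|)%:E).
  apply: mEF; apply: measurable_realfun.measurable_funM; first exact: mPP.
  apply: measurableT_comp => //; apply: measurableT_comp => //; exact: q_meas.
apply/integrableP; split => //.
rewrite (_ : (fun z => _) = (fun z => (PP z * `|ln (q i z.1 z.2)|)%:E)).
  exact: A2.
by apply/funext => z; rewrite gee0_abs// lee_fin mulr_ge0 ?PP_ge0.
Qed.

Lemma int_PP : mm.-integrable setT (fun z => (PP z)%:E).
Proof.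
apply/integrableP; split; first exact: mEF mPP.
rewrite (_ : (fun z => _) = (fun z => (PP z)%:E)).
  by rewrite intPP ltry.
by apply/funext => z; rewrite gee0_abs// lee_fin PP_ge0.
Qed.

Lemma int_lnmix (b : 'rV[R]_D) : simplex b ->
  mm.-integrable setT (fun z => (PP z * ln (mixq q b z))%:E).
Proof.
move=> [b0 b1].
pose Lb := \sum_k `|ln (b ord0 k)|.
pose g := fun z => (PP z * (\sum_k `|ln (q k z.1 z.2)| + Lb))%:E.
have ig : mm.-integrable setT g.
  apply: (eq_integrable measurableT
    ((fun z => \sum_(k < D) (PP z * `|ln (q k z.1 z.2)|)%:E) \+ (fun z => Lb%:E * (PP z)%:E)%E)).
    move=> z _; rewrite /g /= sumEFin -EFinM -EFinD; congr EFin.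
    by rewrite mulrDr mulr_sumr [Lb * _]mulrC.
  apply: integrableD => //.
  - by apply: integrable_sum => // k _; exact: int_PPlnq.
  - by apply: integrableZl => //; exact: int_PP.
apply: (le_integrable measurableT _ _ ig).
  apply: mEF; apply: measurable_realfun.measurable_funM; first exact: mPP.
  by apply: measurableT_comp => //; exact: mmix.
move=> z _; rewrite /g !abse_EFin lee_fin normrM [X in _ <= X]normrM (ger0_norm (PP_ge0 z)).
apply: ler_wpM2l; first exact: PP_ge0.
apply: le_trans (ler_norm _).
exact: (@ln_mix_bound R D (fun k => b ord0 k) (fun k => q k z.1 z.2) b0 b1 (fun k => q_ge0 k _ _)).
Qed.

Lemma simplex_pos (b : 'rV[R]_D) : simplex b -> exists k, 0 < b ord0 k.
Proof.
move=> [b0 b1]; apply/existsP; apply: contraT; rewrite negb_exists => /forallP H.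
have : \sum_k b ord0 k <= 0 by apply: sumr_le0 => k _; rewrite leNgt H.
by rewrite b1 ler10.
Qed.

Lemma mix_pos (b : 'rV[R]_D) z : simplex b -> (forall k, 0 < q k z.1 z.2) ->
  0 < mixq q b z.
Proof.
move=> sb qp; have [k bk] := @simplex_pos b sb.
apply: lt_le_trans (mix_ge_term b z k sb.1).
by rewrite mulr_gt0.
Qed.

Lemma ln_ineq (u v : R) : 0 < u -> 0 < v -> ln u - ln v + 1 <= u / v.
Proof.
move=> u0 v0; have := expR_ge1Dx (ln (u / v)).
rewrite lnK ?posrE ?divr_gt0// lnM ?posrE ?invr_gt0// lnV ?posrE//.
lra.
Qed.

Lemma key (a b : 'rV[R]_D) : simplex a -> simplex b ->
  ((Ecal mu pi q b - Ecal mu pi q a + 1)%:E <= \sum_k (b ord0 k)%:E * Gint k a)%E.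
Proof.
move=> sa sb.
have ia := @int_lnmix a sa; have ib := @int_lnmix b sb.
have Ea : (Ecal mu pi q a)%:E = (\int[mm]_z (PP z * ln (mixq q a z))%:E)%E.
  by rewrite /Ecal /Epibar fineK//; exact: integrable_fin_num ia.
have Eb : (Ecal mu pi q b)%:E = (\int[mm]_z (PP z * ln (mixq q b z))%:E)%E.
  by rewrite /Ecal /Epibar fineK//; exact: integrable_fin_num ib.
pose h z := PP z * ln (mixq q b z) - PP z * ln (mixq q a z) + PP z.
have ih1 : mm.-integrable setT (fun z => (PP z * ln (mixq q b z))%:E - (PP z * ln (mixq q a z))%:E)%E.
  exact: integrableB.
have Ih : (\int[mm]_z (h z)%:E = (Ecal mu pi q b - Ecal mu pi q a + 1)%:E)%E.
  rewrite EFinD EFinB Ea Eb -intPP -(integralB measurableT ib ia).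
  rewrite -(integralD measurableT ih1 int_PP).
  by apply: eq_integral => z _; rewrite /h EFinD EFinB.
pose r z := (PP z * (mixq q b z / mixq q a z))%:E.
have Ir : (\int[mm]_z r z = \sum_k (b ord0 k)%:E * Gint k a)%E.
  transitivity (\int[mm]_z (\sum_k ((b ord0 k)%:E * (PP z * (q k z.1 z.2 / mixq q a z))%:E)))%E.
    apply: eq_integral => z _; rewrite /r.
    under eq_bigr do rewrite -EFinM.
    rewrite sumEFin; congr EFin.
    rewrite /mixq mulr_suml mulr_sumr; apply: eq_bigr => k _.
    ring.
  rewrite ge0_integral_sum//; last 2 first.
  - move=> k; apply: emeasurable_funM; first exact: measurable_cst.
    exact: mPrat.
  - move=> k z _; rewrite mule_ge0// lee_fin ?sb.1// mulr_ge0 ?PP_ge0// divr_ge0// mix_ge0//.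
    exact: sa.1.
  apply: eq_bigr => k _; rewrite ge0_integralZl_EFin//.
  all: try exact: mPrat.
  all: try exact: sb.1.
  move=> z _; rewrite lee_fin mulr_ge0 ?PP_ge0// divr_ge0// mix_ge0//.
  exact: sa.1.
rewrite -Ih -Ir.
apply: (@le_trans _ _ (\int[mm]_z (fun z => (h z)%:E)^\+ z)%E).
  rewrite integralE; rewrite -[leRHS]sube0; apply: leeB => //.
  by apply: integral_ge0 => z _; exact: funeneg_ge0.
have mh : measurable_fun setT (fun z => (h z)%:E).
  apply: mEF; rewrite /h; apply: measurable_funD; last exact: mPP.
  apply: measurable_funB; apply: measurable_realfun.measurable_funM; try exact: mPP.
    by apply: measurableT_comp => //; exact: mmix.
  by apply: measurableT_comp => //; exact: mmix.
have r0 : forall z, setT z -> (0 <= r z)%E.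
  move=> z _; rewrite /r lee_fin mulr_ge0 ?PP_ge0// divr_ge0// mix_ge0//.
    exact: sb.1.
  exact: sa.1.
have mr : measurable_fun setT r.
  apply: mEF; apply: measurable_realfun.measurable_funM; first exact: mPP.
  apply: measurable_realfun.measurable_funM; first exact: mmix.
  exact: measurableT_comp (measurable_inv R) (mmix a).
apply: ae_ge0_le_integral => //.
all: try exact: r0.
all: try exact: mr.
all: try (by move=> z _; exact: funepos_ge0).
all: try exact: measurable_funepos.
apply: filterS AE => z H2 _.
rewrite funeposE ge_max r0// andbT.
have [P0|P0] := eqVneq (PP z) 0%R.
  by rewrite /h /r P0 !mul0r subrr add0r.
have qp : forall k, 0 < q k z.1 z.2.
  by move=> k; case: (H2 k) => // /eqP; rewrite (negbTE P0).
rewrite /h /r lee_fin -mulrBr -[X in _ + X]mulr1 -mulrDr.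
apply: ler_wpM2l; first exact: PP_ge0.
by apply: ln_ineq; apply: mix_pos.
Qed.

Lemma mix_cvg (s : nat -> 'rV[R]_D) (a : 'rV[R]_D) z :
  (forall i, (fun n => s n ord0 i) @ \oo --> a ord0 i) ->
  (fun n => mixq q (s n) z) @ \oo --> mixq q a z.
Proof.
move=> H; rewrite /mixq; apply: cvg_big => //; first exact: add_continuous.
move=> i _; apply: cvgM => //; exact: cvg_cst.
Qed.

Lemma fatou_G (s : nat -> 'rV[R]_D) (a : 'rV[R]_D) j :
  (forall n i, 0 <= s n ord0 i) -> (forall i, 0 <= a ord0 i) ->
  (forall i, (fun n => s n ord0 i) @ \oo --> a ord0 i) ->
  (Gint j a <= limn_einf (fun n => Gint j (s n)))%E.
Proof.
move=> s0 a0 H.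
pose f := fun n z => (PP z * (q j z.1 z.2 / mixq q (s n) z))%:E.
have mf : forall n, measurable_fun setT (f n) := fun n => mPrat j (s n).
have f0 : forall n z, setT z -> (0 <= f n z)%E.
  by move=> n z _; rewrite lee_fin mulr_ge0 ?PP_ge0// divr_ge0// mix_ge0.
apply: le_trans (fatou _ measurableT mf f0).
have ml : measurable_fun setT (fun z => limn_einf (f ^~ z)).
  rewrite (_ : (fun z => _) = (fun z => - limn_esup ((fun n z => - f n z)%E ^~ z))%E).
    apply: measurableT_comp => //; apply: measurable_fun_limn_esup => n.
    exact: measurableT_comp.
  apply/funext => z; rewrite -limn_einfN; congr limn_einf.
  by apply/funext => n /=; rewrite opprK.
apply: ge0_le_integral => //.
- by move=> z _; rewrite lee_fin mulr_ge0 ?PP_ge0// divr_ge0// mix_ge0.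
- exact: mPrat.
move=> z _.
have [m0|m0] := eqVneq (mixq q a z) 0%R.
  rewrite m0 invr0 !mulr0; apply: limn_einf_ge => n; exact: f0.
have Hc : f ^~ z @ \oo --> (PP z * (q j z.1 z.2 / mixq q a z))%:E.
  apply: cvg_EFin; first exact: nearW.
  apply: cvgM => //; first exact: cvg_cst.
  apply: cvgM => //; first exact: cvg_cst.
  by apply: cvgV => //; exact: mix_cvg.
by rewrite (cvg_limn_einf_sup Hc).1.
Qed.

Lemma exists_j (a b : 'rV[R]_D) : simplex a -> simplex b ->
  Ecal mu pi q a < Ecal mu pi q b -> exists k, 0 < b ord0 k /\ (1 < Gint k a)%E.
Proof.
move=> sa sb ab.
have K := @key a b sa sb.
apply: contrapT => /forallNP H.
have : (\sum_k (b ord0 k)%:E * Gint k a <= 1)%E.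
  rewrite (_ : 1%E = (\sum_k b ord0 k)%:E); last by rewrite sb.2.
  rewrite -sumEFin; apply: lee_sum => k _.
  have [bk|bk] := ltP 0 (b ord0 k).
    rewrite -[leRHS]mule1; apply: lee_wpmul2l; first by rewrite lee_fin ltW.
    by rewrite leNgt; apply/negP => h; apply: (H k).
  have -> : b ord0 k = 0 by apply/eqP; rewrite eq_le bk sb.1.
  by rewrite mul0e.
move=> /(le_trans K); rewrite lee_fin; lra.
Qed.

Lemma no_conv (a amax : 'rV[R]_D) : simplex a -> a != amax ->
  (forall a b : 'rV[R]_D, simplex a -> simplex b -> a != b ->
     forall s : R, 0 < s < 1 ->
       s * Ecal mu pi q a + (1 - s) * Ecal mu pi q b
         < Ecal mu pi q (s *: a + (1 - s) *: b)) ->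
  simplex amax ->
  (forall a, simplex a -> Ecal mu pi q a <= Ecal mu pi q amax) ->
  (forall i, (fun n => sq n ord0 i) @ \oo --> a ord0 i) -> False.
Proof.
move=> sa aneq Econc sm amax_max H.
have D0 : (0 < D)%N.
  case: (posnP D) => // D0'; exfalso; move: sa.2.
  rewrite big1 => [/eqP|[m im] _]; first by rewrite eq_sym oner_eq0.
  by exfalso; rewrite D0' in im.
have Elt : Ecal mu pi q a < Ecal mu pi q amax.
  have h1 : 0 < (2^-1 : R) < 1 by rewrite invr_gt0 ltr0n /= invf_lt1// ltr1n.
  have := Econc a amax sa sm aneq _ h1.
  have smid : simplex (2^-1 *: a + (1 - 2^-1) *: amax).
    split.
      move=> i; rewrite !mxE addr_ge0// mulr_ge0 ?sa.1 ?sm.1 ?invr_ge0//.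
      by rewrite subr_ge0; case/andP: h1 => _ /ltW.
    rewrite (eq_bigr (fun i => 2^-1 * a ord0 i + (1 - 2^-1) * amax ord0 i)).
      by rewrite big_split /= -!mulr_sumr sa.2 sm.2 !mulr1 addrC subrK.
    by move=> i _; rewrite !mxE.
  have := amax_max _ smid.
  move: (Ecal mu pi q (2^-1 *: a + (1 - 2^-1) *: amax)) => e.
  lra.
have [k [bk Gk]] := @exists_j a amax sa sm Elt.
have s0 : forall n i, 0 <= sq n ord0 i by move=> n i; exact/ltW/sq_pos.
have Fk := @fatou_G sq a k s0 sa.1 H.
have [y [y1 yG]] : exists y : R, 1 < y /\ (y%:E < Gint k a)%E.
  move: Gk; case: (Gint k a) => [r| |].
  - rewrite lte_fin => r1; exists ((1 + r) / 2); split; rewrite ?lte_fin; lra.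
  - by move=> _; exists 2; split; [rewrite ltr1n|exact: ltry].
  - by rewrite ltNge leNye.
have [N HN] := @liminf_gt R _ _ (lt_le_trans yG Fk).
apply: (@growth_contra R (fun n => sq n ord0 k) y (a ord0 k) N y1).
- exact: sq_pos.
- move=> n Nn; apply: sq_growth => //; first lra.
  exact: HN.
- exact: H.
Qed.
End S2.
End S.


Theorem proposition4p2 (d : measure_display) (T : measurableType d) (R : realType)
  (mu : {sigma_finite_measure set T -> \bar R})
  (pi : T -> R) (D : nat) (q : 'I_D -> T -> T -> R)
  (* pi is a probability density w.r.t. mu *)
  (pi_meas : measurable_fun setT pi)
  (pi_ge0 : forall x, 0 <= pi x)
  (pi_int1 : (\int[mu]_x (pi x)%:E = 1)%E)
  (* each q_d is a transition density w.r.t. mu *)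
  (q_meas : forall i, measurable_fun setT (fun z : T * T => q i z.1 z.2))
  (q_ge0 : forall i x y, 0 <= q i x y)
  (q_int1 : forall i x, (\int[mu]_y (q i x y)%:E = 1)%E)
  (* (A1) *)
  (A1 : forall i, (\int[(mu \x mu)%E]_(z in [set z : T * T | q i z.1 z.2 = 0%R])
                     (pi z.1 * pi z.2)%:E = 0)%E)
  (* (A2) *)
  (A2 : forall i, (Epibar mu pi (fun z => `|ln (q i z.1 z.2)|%R) < +oo)%E)
  (* standing assumption: E_pibar strictly concave on S *)
  (Econc : forall a b : 'rV[R]_D, simplex a -> simplex b -> a != b ->
     forall s : R, 0 < s < 1 ->
       s * Ecal mu pi q a + (1 - s) * Ecal mu pi q b
         < Ecal mu pi q (s *: a + (1 - s) *: b))
  (* amax is the (unique) global maximizer of E_pibar on S *)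
  (amax : 'rV[R]_D) (amax_S : simplex amax)
  (amax_max : forall a, simplex a -> Ecal mu pi q a <= Ecal mu pi q amax) :
  forall a : 'rV[R]_D, simplex a -> a != amax ->
    exists V : set 'rV[R]_D,
      (exists U : set 'rV[R]_D, open U /\ U a /\ V = U `&` @simplex R D) /\
      forall t0 : nat, (1 <= t0)%N -> V (alpha_seq mu pi q t0) ->
        exists t : nat, (t0 < t)%N /\ ~ V (alpha_seq mu pi q t).
Proof.
move=> a sa aneq.
have [conv|nconv] := pselect (forall e : R, 0 < e -> exists N, forall n, (N <= n)%N ->
   ball a e (sq _ _ _ mu pi _ q n)).
  exfalso; apply: (@no_conv d T R mu pi D q pi_meas pi_ge0 pi_int1 q_meas q_ge0 A1 A2 a amax sa aneq Econc amax_S amax_max) => i.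
  apply/cvgrPdist_lt => e e0; have [N HN] := conv e e0.
  exists N => // n /= Nn; have := HN n Nn.
  by case => _ /(_ ord0 i); rewrite -ball_normE /ball_ /=.
move/existsNP: nconv => [e /not_implyP [e0 /forallNP He]].
exists (ball a e `&` @simplex R D); split.
  exists (ball a e); split; first exact: ball_open.
  by split => //; exact: ballxx.
move=> t0 t01 _.
have /existsNP [n /not_implyP [t0n nb]] := He t0.
exists n.+1; split; first by [].
by move=> [].
Qed.
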